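(* Let $L$ be the $S$-glued sum of an $S$-glued system $(L_x)_{x\in S}$, and let $U\subseteq L$ be a subset having a least element $u$ and a greatest element $v$ (with respect to the order of $L$). Let $A$ be the set of elements $a\in U$ such that there is no $b\in U$ with $u<b<a$ (and $a\ne u$). Assume that every $a\in A$ covers $u$ in $L$ and that $v=\sup_L A$. Then there is $x\in S$ with $U\subseteq L_x$ such that for all $a,b,c\in U$: $\sup_L(a,b)=c$ iff $a+_x b=c$, and $\inf_L(a,b)=c$ iff $a\cdot_x b=c$.
   Context: Let $S$ be a lattice of finite length (every chain in $S$ is finite), with order $\le$, join $\vee$ and meet $\wedge$; $x\prec y$ means that $y$ covers $x$. An \emph{$S$-glued system} is a family $(L_x,\le_x)_{x\in S}$ of lattices of finite length (with join $+_x$, meet $\cdot_x$, least element $0_x$, greatest element $1_x$), whose underlying sets may overlap, such that for all $x,y\in S$: (1) if $x\le y$ and $L_x\cap L_y\ne\emptyset$, then $L_x\cap L_y$ is a filter of $L_x$ and an ideal of $L_y$; (2) in the situation of (1), for all $a,b\in L_x\cap L_y$: $a\le_x b$ iff $a\le_y b$; (3) if $x\prec y$ then $L_x\cap L_y\ne\emptyset$; (4) $L_x\cap L_y\subseteq L_{x\wedge y}\cap L_{x\vee y}$. The \emph{$S$-glued sum} of the system is the set $L=\bigcup_{x\in S}L_x$ equipped with the relation $\le$ defined as the transitive closure of $\bigcup_{x\in S}\le_x$; it is a lattice. *)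

(* Defs.v *)
(* S is a mathcomp latticeType; the glued lattices L_x live
   as subsets of a common carrier type T, with their own order relations. *)
From HB Require Import structures.
From mathcomp Require Import all_boot all_order.
From Stdlib Require Relation_Operators List.
Set Implicit Arguments. Unset Strict Implicit. Unset Printing Implicit Defensive.
Import Order.TTheory.
Local Open Scope order_scope.

Section GeneralOrders.
Variable T : Type.

Definition finite_length (P : T -> Prop) (le : T -> T -> Prop) : Prop :=
  forall C : T -> Prop,
    (forall a, C a -> P a) ->
    (forall a b, C a -> C b -> le a b \/ le b a) ->
    exists s : list T, forall a, C a -> List.In a s.

Definition is_lub (P : T -> Prop) (le : T -> T -> Prop) (a b c : T) : Prop :=
  P c /\ le a c /\ le b c /\ forall d, P d -> le a d -> le b d -> le c d.

Definition is_glb (P : T -> Prop) (le : T -> T -> Prop) (a b c : T) : Prop :=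
  P c /\ le c a /\ le c b /\ forall d, P d -> le d a -> le d b -> le d c.

Definition is_sup (P : T -> Prop) (le : T -> T -> Prop) (A : T -> Prop) (c : T)
  : Prop :=
  P c /\ (forall a, A a -> le a c) /\
  (forall d, P d -> (forall a, A a -> le a d) -> le c d).

Definition is_fl_lattice (P : T -> Prop) (le : T -> T -> Prop) : Prop :=
  (forall a b, le a b -> P a /\ P b) /\
  (forall a, P a -> le a a) /\
  (forall a b, le a b -> le b a -> a = b) /\
  (forall a b c, le a b -> le b c -> le a c) /\
  (forall a b, P a -> P b -> exists c, is_lub P le a b c) /\
  (forall a b, P a -> P b -> exists c, is_glb P le a b c) /\
  (exists z, P z /\ forall a, P a -> le z a) /\
  (exists t, P t /\ forall a, P a -> le a t) /\
  finite_length P le.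

Definition is_filter (P : T -> Prop) (le : T -> T -> Prop) (F : T -> Prop)
  : Prop :=
  (exists a, F a) /\ (forall a, F a -> P a) /\
  (forall a b, F a -> P b -> le a b -> F b) /\
  (forall a b c, F a -> F b -> is_glb P le a b c -> F c).

Definition is_ideal (P : T -> Prop) (le : T -> T -> Prop) (I : T -> Prop)
  : Prop :=
  (exists a, I a) /\ (forall a, I a -> P a) /\
  (forall a b, I a -> P b -> le b a -> I b) /\
  (forall a b c, I a -> I b -> is_lub P le a b c -> I c).

End GeneralOrders.

Definition covers {d : Order.disp_t} {S : latticeType d} (x y : S) : Prop :=
  x < y /\ ~ (exists z, x < z /\ z < y).

Definition lattice_finite_length {d : Order.disp_t} (S : latticeType d) : Prop :=
  finite_length (fun _ : S => True) (fun x y => x <= y).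

Definition glued_system {d : Order.disp_t} {S : latticeType d} {T : Type}
  (Lm : S -> T -> Prop) (le : S -> T -> T -> Prop) : Prop :=
  (forall x, is_fl_lattice (Lm x) (le x)) /\
  (forall x y, x <= y -> (exists a, Lm x a /\ Lm y a) ->
     is_filter (Lm x) (le x) (fun a => Lm x a /\ Lm y a) /\
     is_ideal (Lm y) (le y) (fun a => Lm x a /\ Lm y a)) /\
  (forall x y, x <= y -> (exists a, Lm x a /\ Lm y a) ->
     forall a b, Lm x a -> Lm y a -> Lm x b -> Lm y b ->
       (le x a b <-> le y a b)) /\
  (forall x y, covers x y -> exists a, Lm x a /\ Lm y a) /\
  (forall x y a, Lm x a -> Lm y a -> Lm (x `&` y) a /\ Lm (x `|` y) a).

Definition glued_set {d : Order.disp_t} {S : latticeType d} {T : Type}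
  (Lm : S -> T -> Prop) : T -> Prop := fun a => exists x, Lm x a.

Definition glued_le {d : Order.disp_t} {S : latticeType d} {T : Type}
  (le : S -> T -> T -> Prop) : T -> T -> Prop :=
  Relation_Operators.clos_trans T (fun a b => exists x, le x a b).

(* Main.v *)
Require Import Defs.
From mathcomp Require Import all_boot all_order.
From Stdlib Require Import Classical ClassicalEpsilon Relation_Operators Operators_Properties Lia.
From Stdlib Require PeanoNat FinFun List.
Import Order.TTheory.
Local Open Scope order_scope.

Record core {d} {S : latticeType d} {T : Type} (Lm : S -> T -> Prop)
  (le : S -> T -> T -> Prop) : Prop := {
  K1 : forall x a b, le x a b -> Lm x a /\ Lm x b;
  K2 : forall x a, Lm x a -> le x a a;
  K4 : forall x a b c, le x a b -> le x b c -> le x a c;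
  K5 : forall x a b, Lm x a -> Lm x b -> exists c, is_lub (Lm x) (le x) a b c;
  K6 : forall x, exists z, Lm x z /\ forall a, Lm x a -> le x z a;
  K7 : forall x y a b, x <= y -> Lm x a -> Lm y a -> le x a b -> Lm y b;
  K8 : forall x y a b, x <= y -> Lm x a -> Lm y a -> le y b a -> Lm x b;
  K9 : forall x y a b, x <= y -> Lm x a -> Lm y a -> Lm x b -> Lm y b ->
        (le x a b <-> le y a b);
  K10 : forall x y a, Lm x a -> Lm y a -> Lm (x `&` y) a /\ Lm (x `|` y) a;
  K11 : forall x a b, Lm x a -> Lm x b -> exists c, is_glb (Lm x) (le x) a b c;
  K12 : forall x, exists z, Lm x z /\ forall a, Lm x a -> le x a z }.


Arguments K1 {d S T Lm le} _ {x a b}.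
Arguments K2 {d S T Lm le} _ {x a}.
Arguments K4 {d S T Lm le} _ {x a b c}.
Arguments K5 {d S T Lm le} _ {x a b}.
Arguments K6 {d S T Lm le} _ x.
Arguments K7 {d S T Lm le} _ {x y a b}.
Arguments K8 {d S T Lm le} _ {x y a b}.
Arguments K9 {d S T Lm le} _ {x y a b}.
Arguments K10 {d S T Lm le} _ {x y a}.
Arguments K11 {d S T Lm le} _ {x a b}.
Arguments K12 {d S T Lm le} _ x.

Definition stepm {d} {S : latticeType d} {T} (le : S -> T -> T -> Prop) (m : S)
  : T -> T -> Prop := fun a b => exists y, y <= m /\ le y a b.
Definition gstep {d} {S : latticeType d} {T} (le : S -> T -> T -> Prop)
  : T -> T -> Prop := fun a b => exists x, le x a b.


Lemma lift_step {d} {S : latticeType d} {T} {Lm : S -> T -> Prop} {le}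
  (K : core Lm le) {y z a b} : y <= z -> Lm z a -> le y a b -> Lm z b /\ le z a b.
Proof.
  intros Hyz Hz H. destruct (K1 K H) as [Ha Hb].
  assert (Hzb : Lm z b) by exact (K7 K Hyz Ha Hz H).
  split; auto. apply (K9 K Hyz Ha Hz Hb Hzb); auto.
Qed.

Lemma lower_step {d} {S : latticeType d} {T} {Lm : S -> T -> Prop} {le}
  (K : core Lm le) {y z a b} : z <= y -> Lm z b -> le y a b -> Lm z a /\ le z a b.
Proof.
  intros Hzy Hz H. destruct (K1 K H) as [Ha Hb].
  assert (Hza : Lm z a) by exact (K8 K Hzy Hz Hb H).
  split; auto. apply (K9 K Hzy Hza Ha Hz Hb); auto.
Qed.

Lemma stepm_mono {d} {S : latticeType d} {T} {le : S -> T -> T -> Prop} {w z a b} :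
  w <= z -> clos_trans T (stepm le w) a b -> clos_trans T (stepm le z) a b.
Proof.
  intros Hwz H. induction H as [a b [y [Hy H]]| a b c _ IH1 _ IH2].
  - apply t_step. exists y. split; auto. exact (le_trans Hy Hwz).
  - apply t_trans with b; auto.
Qed.

Lemma lower {d} {S : latticeType d} {T} {Lm : S -> T -> Prop} {le}
  (K : core Lm le) {a c} : clos_trans T (gstep le) a c -> forall z, Lm z c ->
  exists w, w <= z /\ Lm w a /\ clos_trans T (stepm le z) a c.
Proof.
  induction 1 as [a c [y Hy] | a b c _ IH1 _ IH2]; intros z Hz.
  - destruct (K1 K Hy) as [Ha Hc].
    destruct (K10 K Hc Hz) as [Hm _].
    destruct (lower_step K (leIl y z) Hm Hy) as [Hma Hle].
    exists (y `&` z). split; [exact (leIr z y)|]. split; auto.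
    apply t_step. exists (y `&` z). split; auto. exact (leIr z y).
  - destruct (IH2 z Hz) as [w1 [Hw1 [Hb Hbc]]].
    destruct (IH1 w1 Hb) as [w2 [Hw2 [Ha Hab]]].
    exists w2. split; [exact (le_trans Hw2 Hw1)|]. split; auto.
    apply t_trans with b; auto. exact (stepm_mono Hw1 Hab).
Qed.

Lemma lift_b {d} {S : latticeType d} {T} {Lm : S -> T -> Prop} {le}
  (K : core Lm le) {z a c} : clos_trans T (stepm le z) a c -> Lm z a ->
  le z a c /\ Lm z c.
Proof.
  induction 1 as [a c [y [Hy H]] | a b c _ IH1 _ IH2]; intros Ha.
  - destruct (lift_step K Hy Ha H) as [Hc Hl]. auto.
  - destruct (IH1 Ha) as [Hab Hb]. destruct (IH2 Hb) as [Hbc Hc].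
    split; auto. exact (K4 K Hab Hbc).
Qed.

Lemma G1 {d} {S : latticeType d} {T} {Lm : S -> T -> Prop} {le}
  (K : core Lm le) {x a c} : Lm x a -> Lm x c -> clos_trans T (gstep le) a c ->
  le x a c.
Proof.
  intros Ha Hc H. destruct (lower K H _ Hc) as [w [_ [_ Hp]]].
  exact (proj1 (lift_b K Hp Ha)).
Qed.

Lemma G2 {d} {S : latticeType d} {T} {Lm : S -> T -> Prop} {le}
  (K : core Lm le) {x a b c} : Lm x a -> Lm x c -> clos_trans T (gstep le) a b ->
  clos_trans T (gstep le) b c -> Lm x b.
Proof.
  intros Ha Hc Hab Hbc. destruct (lower K Hbc _ Hc) as [w [Hw [Hb _]]].
  destruct (lower K Hab _ Hb) as [w' [_ [_ Hp]]].
  exact (proj2 (lift_b K (stepm_mono Hw Hp) Ha)).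
Qed.

Lemma lift_u {d} {S : latticeType d} {T} {Lm : S -> T -> Prop} {le}
  (K : core Lm le) {a c} : clos_trans T (gstep le) a c -> forall x, Lm x a ->
  exists w, x <= w /\ Lm w c.
Proof.
  induction 1 as [a c [y Hy] | a b c _ IH1 _ IH2]; intros x Hx.
  - destruct (K1 K Hy) as [Ha Hc]. destruct (K10 K Hx Ha) as [_ Hj].
    destruct (lift_step K (leUr y x) Hj Hy) as [Hc' _].
    exists (x `|` y). split; auto. exact (leUl x y).
  - destruct (IH1 x Hx) as [w1 [H1 Hb]]. destruct (IH2 w1 Hb) as [w2 [H2 Hc]].
    exists w2. split; auto. exact (le_trans H1 H2).
Qed.

Lemma LT {d} {S : latticeType d} {T} {Lm : S -> T -> Prop} {le}
  (K : core Lm le) {x y a b c e} : x <= y -> Lm x a -> Lm y a -> Lm x b -> Lm y b ->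
  is_lub (Lm x) (le x) a b c -> Lm y e -> le y a e -> le y b e -> le y c e.
Proof.
  intros Hxy Hxa Hya Hxb Hyb [Hc [Hac [Hbc Hl]]] Hye Hae Hbe.
  assert (Hyc : Lm y c) by exact (K7 K Hxy Hxa Hya Hac).
  destruct (K5 K Hya Hyb) as [k [Hk [Hak [Hbk Hkl]]]].
  assert (Hac' : le y a c) by (apply (K9 K Hxy Hxa Hya Hc Hyc); auto).
  assert (Hbc' : le y b c) by (apply (K9 K Hxy Hxb Hyb Hc Hyc); auto).
  assert (Hkc : le y k c) by auto.
  assert (Hxk : Lm x k) by exact (K8 K Hxy Hc Hyc Hkc).
  assert (Hak' : le x a k) by (apply (K9 K Hxy Hxa Hya Hxk Hk); auto).
  assert (Hbk' : le x b k) by (apply (K9 K Hxy Hxb Hyb Hxk Hk); auto).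
  assert (Hck : le x c k) by auto.
  assert (Hck' : le y c k) by (apply (K9 K Hxy Hc Hyc Hxk Hk); auto).
  exact (K4 K Hck' (Hkl e Hye Hae Hbe)).
Qed.

Lemma ct_crt1n {A} {R : A -> A -> Prop} {a b} : clos_trans A R a b -> clos_refl_trans_1n A R a b.
Proof.
  intro H. apply clos_rt_rt1n. induction H as [a b H|a b c _ IH1 _ IH2].
  - apply rt_step; auto.
  - apply rt_trans with b; auto.
Qed.

Lemma psi {d} {S : latticeType d} {T} {Lm : S -> T -> Prop} {le}
  (K : core Lm le) (m : S) : forall a dd, clos_refl_trans_1n T (stepm le m) a dd ->
  Lm m dd -> forall x y z0 c, Lm x a -> x <= y -> y <= m -> x <= m ->
  Lm y z0 -> (forall e, Lm y e -> le y z0 e) ->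
  is_lub (Lm x) (le x) a z0 c -> clos_trans T (gstep le) c dd.
Proof.
  induction 1 as [a | a t dd [q [Hq Hat]] _ IH]; intros Hd x y z0 c Hxa Hxy Hym Hxm Hyz0 Hbot Hlub.
  - destruct Hlub as [Hc [Hac [Hzc Hl]]].
    destruct (K1 K Hzc) as [Hxz0 _].
    assert (Hyc : Lm y c) by exact (K7 K Hxy Hxz0 Hyz0 Hzc).
    assert (Hmc : Lm m c) by exact (K7 K Hxm Hxa Hd Hac).
    destruct (K6 K m) as [z2 [Hmz2 Hb2]].
    assert (Hyz2 : Lm y z2) by exact (K8 K Hym Hyc Hmc (Hb2 c Hmc)).
    assert (Hxz2 : Lm x z2) by exact (K8 K Hxm Hxa Hd (Hb2 a Hd)).
    assert (H1 : le x z0 z2) by (apply (K9 K Hxy Hxz0 Hyz0 Hxz2 Hyz2); auto).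
    assert (H2 : le x z2 a) by (apply (K9 K Hxm Hxz2 Hmz2 Hxa Hd); auto).
    assert (H3 : le x c a) by (apply Hl; auto; [exact (K2 K Hxa)| exact (K4 K H1 H2)]).
    apply t_step. exists x. exact H3.
  - destruct Hlub as [Hc [Hac [Hzc Hl]]].
    destruct (K1 K Hzc) as [Hxz0 _].
    destruct (K1 K Hat) as [Hqa Hqt].
    set (x' := x `|` q).
    assert (Hx'a : Lm x' a) by exact (proj2 (K10 K Hxa Hqa)).
    destruct (lift_step K (leUr q x) Hx'a Hat) as [Hx't Hlat].
    assert (Hxx' : x <= x') by exact (leUl x q).
    assert (Hx'm : x' <= m) by (unfold x'; rewrite leUx Hxm Hq; reflexivity).
    assert (Hyc : Lm y c) by exact (K7 K Hxy Hxz0 Hyz0 Hzc).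
    assert (Hx'c : Lm x' c) by exact (K7 K Hxx' Hxa Hx'a Hac).
    set (y' := y `|` x').
    assert (Hy'c : Lm y' c) by exact (proj2 (K10 K Hyc Hx'c)).
    destruct (K6 K y') as [z1 [Hy'z1 Hb1]].
    assert (Hx'y' : x' <= y') by exact (leUr x' y).
    assert (Hyy' : y <= y') by exact (leUl y x').
    assert (Hy'm : y' <= m) by (unfold y'; rewrite leUx Hym Hx'm; reflexivity).
    assert (Hx'z1 : Lm x' z1) by exact (K8 K Hx'y' Hx'c Hy'c (Hb1 c Hy'c)).
    assert (Hyz1 : Lm y z1) by exact (K8 K Hyy' Hyc Hy'c (Hb1 c Hy'c)).
    assert (H01 : le y z0 z1) by exact (Hbot z1 Hyz1).
    assert (Hz1c' : le x' z1 c) by (apply (K9 K Hx'y' Hx'z1 Hy'z1 Hx'c Hy'c); auto).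
    assert (Hxz1 : Lm x z1) by exact (K8 K Hxx' Hc Hx'c Hz1c').
    assert (H01x : le x z0 z1) by (apply (K9 K Hxy Hxz0 Hyz0 Hxz1 Hyz1); auto).
    assert (Hz1c : le x z1 c) by (apply (K9 K Hxx' Hxz1 Hx'z1 Hc Hx'c); auto).
    assert (Hlub1 : is_lub (Lm x) (le x) a z1 c).
    { split; auto. split; auto. split; auto. intros e He Hae Hze.
      apply Hl; auto. exact (K4 K H01x Hze). }
    destruct (K5 K Hx't Hx'z1) as [c' Hc'].
    assert (IH' := IH Hd x' y' z1 c' Hx't Hx'y' Hy'm Hx'm Hy'z1 Hb1 Hc').
    destruct Hc' as [Hc'm [Htc' [Hz1c'' _]]].
    assert (Hcc' : le x' c c').
    { apply (LT K Hxx' Hxa Hx'a Hxz1 Hx'z1 Hlub1 Hc'm); auto.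
      exact (K4 K Hlat Htc'). }
    apply t_trans with c'; auto. apply t_step. exists x'. exact Hcc'.
Qed.

Lemma jastar {d} {S : latticeType d} {T} {Lm : S -> T -> Prop} {le}
  (K : core Lm le) (m : S) : forall a dd, clos_refl_trans_1n T (stepm le m) a dd ->
  Lm m dd -> forall x b c, x <= m -> Lm x a -> Lm x b ->
  clos_trans T (gstep le) b dd ->
  is_lub (Lm x) (le x) a b c -> clos_trans T (gstep le) c dd.
Proof.
  induction 1 as [a | a t dd [q [Hq Hat]] _ IH]; intros Hd x b c Hxm Hxa Hxb Hbd Hlub.
  - destruct Hlub as [Hc [Hac [Hbc Hl]]].
    assert (Hba : le x b a) by exact (G1 K Hxb Hxa Hbd).
    apply t_step. exists x. apply Hl; auto. exact (K2 K Hxa).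
  - destruct (K1 K Hat) as [Hqa Hqt].
    set (x' := x `|` q).
    assert (Hx'a : Lm x' a) by exact (proj2 (K10 K Hxa Hqa)).
    destruct (lift_step K (leUr q x) Hx'a Hat) as [Hx't Hlat].
    assert (Hxx' : x <= x') by exact (leUl x q).
    assert (Hx'm : x' <= m) by (unfold x'; rewrite leUx Hxm Hq; reflexivity).
    destruct (K6 K x') as [z0 [Hx'z0 Hb0]].
    assert (Hxz0 : Lm x z0) by exact (K8 K Hxx' Hxa Hx'a (Hb0 a Hx'a)).
    destruct (K5 K Hxb Hxz0) as [bp Hbp].
    destruct (lower K Hbd _ Hd) as [w [_ [_ Hpath]]].
    assert (Hbpd := psi K _ _ _ (ct_crt1n Hpath) Hd _ _ _ _ Hxb Hxx' Hx'm Hxm Hx'z0 Hb0 Hbp).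
    destruct Hbp as [Hxbp [Hbbp [Hz0bp _]]].
    assert (Hx'bp : Lm x' bp) by exact (K7 K Hxx' Hxz0 Hx'z0 Hz0bp).
    destruct (K5 K Hx't Hx'bp) as [c' Hc'].
    assert (IH' := IH Hd x' bp c' Hx'm Hx't Hx'bp Hbpd Hc').
    destruct Hc' as [Hc'm [Htc' [Hbpc' _]]].
    destruct (K5 K Hxa Hxbp) as [c2 Hc2].
    assert (Hc2c' : le x' c2 c').
    { apply (LT K Hxx' Hxa Hx'a Hxbp Hx'bp Hc2 Hc'm); auto.
      exact (K4 K Hlat Htc'). }
    destruct Hc2 as [Hxc2 [Hac2 [Hbpc2 _]]].
    destruct Hlub as [Hc [Hac [Hbc Hl]]].
    assert (Hcc2 : le x c c2) by (apply Hl; auto; exact (K4 K Hbbp Hbpc2)).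
    apply t_trans with c2; [apply t_step; exists x; exact Hcc2|].
    apply t_trans with c'; auto. apply t_step. exists x'. exact Hc2c'.
Qed.

Lemma JA {d} {S : latticeType d} {T} {Lm : S -> T -> Prop} {le}
  (K : core Lm le) {x a b c dd} : Lm x a -> Lm x b -> is_lub (Lm x) (le x) a b c ->
  clos_trans T (gstep le) a dd -> clos_trans T (gstep le) b dd ->
  clos_trans T (gstep le) c dd.
Proof.
  intros Ha Hb Hl Had Hbd.
  destruct (lift_u K Had x Ha) as [w1 [Hw1 Hd1]].
  destruct (lift_u K Hbd x Hb) as [w2 [Hw2 Hd2]].
  assert (Hm : Lm (w1 `&` w2) dd) by exact (proj1 (K10 K Hd1 Hd2)).
  assert (Hxm : x <= w1 `&` w2) by (rewrite lexI Hw1 Hw2; reflexivity).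
  destruct (lower K Had _ Hm) as [w [_ [_ Hp]]].
  exact (jastar K _ _ _ (ct_crt1n Hp) Hm _ _ _ Hxm Ha Hb Hbd Hl).
Qed.

Lemma core_dual {d} {S : latticeType d} {T} {Lm : S -> T -> Prop} {le}
  (K : core Lm le) : @core _ (S^d) T Lm (fun x a b => le x b a).
Proof.
  constructor.
  - intros x a b H. destruct (K1 K H); auto.
  - intros x a H. exact (K2 K H).
  - intros x a b c H1 H2. exact (K4 K H2 H1).
  - intros x a b Ha Hb. exact (K11 K Ha Hb).
  - intros x. exact (K12 K x).
  - intros x y a b Hxy Hxa Hya H. exact (K8 K Hxy Hya Hxa H).
  - intros x y a b Hxy Hxa Hya H. exact (K7 K Hxy Hya Hxa H).
  - intros x y a b Hxy Hxa Hya Hxb Hyb.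
    destruct (K9 K (x:=y) (y:=x) (a:=b) (b:=a) Hxy Hyb Hxb Hya Hxa). tauto.
  - intros x y a Hx Hy. destruct (K10 K Hx Hy). split; assumption.
  - intros x a b Ha Hb. exact (K5 K Ha Hb).
  - intros x. exact (K6 K x).
Qed.

Lemma ct_flip {A} {R : A -> A -> Prop} {a b} :
  clos_trans A R a b -> clos_trans A (fun x y => R y x) b a.
Proof.
  induction 1 as [a b H|a b c _ IH1 _ IH2].
  - apply t_step; auto.
  - apply t_trans with b; auto.
Qed.

Lemma MA {d} {S : latticeType d} {T} {Lm : S -> T -> Prop} {le}
  (K : core Lm le) {x a b c dd} : Lm x a -> Lm x b -> is_glb (Lm x) (le x) a b c ->
  clos_trans T (gstep le) dd a -> clos_trans T (gstep le) dd b ->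
  clos_trans T (gstep le) dd c.
Proof.
  intros Ha Hb Hg Hda Hdb.
  assert (H := @JA _ (S^d) T Lm (fun x a b => le x b a) (core_dual K) x a b c dd Ha Hb Hg
     (ct_flip Hda) (ct_flip Hdb)).
  exact (ct_flip H).
Qed.

Lemma exists_maximal (T : Type) (P : T -> Prop) (le : T -> T -> Prop) :
  finite_length P le -> (forall a, P a -> le a a) ->
  (forall a b, le a b -> le b a -> a = b) ->
  (forall a b c, le a b -> le b c -> le a c) ->
  forall Q : T -> Prop, (forall a, Q a -> P a) -> forall a0, Q a0 ->
  exists m, Q m /\ forall z, Q z -> le m z -> z = m.
Proof.
  intros FL Hr Ha Ht Q HQ a0 Ha0.
  apply NNPP; intro Hn.
  assert (Hnext : forall m, Q m -> exists z, Q z /\ le m z /\ z <> m).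
  { intros m Hm. apply NNPP; intro H. apply Hn. exists m. split; auto.
    intros z Hz Hmz. apply NNPP; intro Hzm. apply H. exists z; auto. }
  set (nx := fun m => epsilon (inhabits a0) (fun z => Q z /\ le m z /\ z <> m)).
  assert (Hnx : forall m, Q m -> Q (nx m) /\ le m (nx m) /\ nx m <> m).
  { intros m Hm. unfold nx. apply epsilon_spec. auto. }
  set (f := fun n => Nat.iter n nx a0).
  assert (HQf : forall n, Q (f n)).
  { induction n as [|n IH]; simpl; auto. apply Hnx; auto. }
  assert (HS : forall n, f (S n) = nx (f n)) by reflexivity.
  assert (Hlt : forall n k, le (f n) (f (S (Nat.add k n)))).
  { intros n k. induction k as [|k IH].
    - change (le (f n) (nx (f n))). apply Hnx; auto.
    - change (le (f n) (nx (f (S (Nat.add k n))))). eapply Ht. apply IH. apply Hnx; auto. }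
  assert (Hne : forall n k, f (S (Nat.add k n)) <> f n).
  { intros n k Heq. destruct k as [|k].
    - change (nx (f n) = f n) in Heq. apply (proj2 (proj2 (Hnx _ (HQf n)))). exact Heq.
    - assert (H1 : le (f n) (f (S n))) by (change (le (f n) (nx (f n))); apply Hnx; auto).
      assert (H2 : le (f (S n)) (f (S (Nat.add k (S n))))) by apply Hlt.
      assert (E : S (Nat.add k (S n)) = S (Nat.add (S k) n)) by (simpl; f_equal; lia).
      rewrite E Heq in H2.
      assert (H3 : f (S n) = f n) by exact (Ha _ _ H2 H1).
      change (nx (f n) = f n) in H3. exact (proj2 (proj2 (Hnx _ (HQf n))) H3). }
  assert (Hinj : forall n m, f n = f m -> n = m).
  { intros n m Heq. destruct (PeanoNat.Nat.lt_trichotomy n m) as [Hnm|[Hnm|Hnm]]; auto.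
    - exfalso. assert (E : m = S (Nat.add (m - S n)%coq_nat n)) by lia.
      rewrite E in Heq. exact (Hne _ _ (esym Heq)).
    - exfalso. assert (E : n = S (Nat.add (n - S m)%coq_nat m)) by lia.
      rewrite E in Heq. exact (Hne _ _ Heq). }
  destruct (FL (fun a => exists n, f n = a)) as [s Hs].
  - intros a [n <-]. apply HQ; auto.
  - intros a b [n <-] [m <-].
    destruct (PeanoNat.Nat.lt_trichotomy n m) as [Hnm|[Hnm|Hnm]].
    + left. assert (E : m = S (Nat.add (m - S n)%coq_nat n)) by lia. rewrite E. apply Hlt.
    + subst. left. apply Hr. apply HQ; auto.
    + right. assert (E : n = S (Nat.add (n - S m)%coq_nat m)) by lia. rewrite E. apply Hlt.
  - set (l := List.map f (List.seq 0 (S (List.length s)))).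
    assert (Hnd : List.NoDup l).
    { apply FinFun.Injective_map_NoDup. intros n m; apply Hinj. apply List.seq_NoDup. }
    assert (Hincl : List.incl l s).
    { intros a Hal. unfold l in Hal. apply List.in_map_iff in Hal.
      destruct Hal as [n [<- _]]. apply Hs. exists n; auto. }
    assert (Hlen := List.NoDup_incl_length Hnd Hincl).
    unfold l in Hlen. rewrite List.length_map List.length_seq in Hlen. lia.
Qed.

Lemma ct_gs {d} {S : latticeType d} {T} {Lm : S -> T -> Prop} {le}
  (K : core Lm le) {a b} : clos_trans T (gstep le) a b -> glued_set Lm a /\ glued_set Lm b.
Proof.
  induction 1 as [a b [x H]|a b c _ IH1 _ IH2].
  - destruct (K1 K H). split; exists x; auto.
  - tauto.
Qed.

Lemma cover_step {d} {S : latticeType d} {T} (le : S -> T -> T -> Prop) (u a : T) :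
  clos_trans T (gstep le) u a ->
  (forall t, clos_trans T (gstep le) u t -> clos_trans T (gstep le) t a -> t = u \/ t = a) ->
  exists y, le y u a.
Proof.
  intros H Hc. apply clos_trans_t1n in H.
  assert (G : forall s a', clos_trans_1n T (gstep le) s a' -> a' = a -> s = u ->
             exists y, le y u a).
  { induction 1 as [s a' [y Hy] | s t a' [y Hy] Hta IH]; intros E1 E2; subst.
    - eauto.
    - destruct (classic (t = u)) as [Htu|Htu]; [apply IH; auto|].
      destruct (Hc t (t_step _ _ _ _ (ex_intro _ y Hy)) (clos_t1n_trans _ _ _ _ Hta))
        as [E|E]; [contradiction|]. subst. eauto. }
  exact (G u a H (erefl a) (erefl u)).
Qed.

Theorem lemma3p1 (d : Order.disp_t) (S : latticeType d) (T : Type)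
  (Lm : S -> T -> Prop) (le : S -> T -> T -> Prop)
  (HS : lattice_finite_length S)
  (Hsys : glued_system Lm le)
  (U : T -> Prop) (u v : T)
  (HUL : forall a, U a -> glued_set Lm a)
  (Hu : U u /\ forall a, U a -> glued_le le u a)
  (Hv : U v /\ forall a, U a -> glued_le le a v) :
  let ltL := fun a b => glued_le le a b /\ a <> b in
  let A := fun a => U a /\ a <> u /\ ~ (exists b, U b /\ ltL u b /\ ltL b a) in
  (forall a, A a -> ltL u a /\
     ~ (exists c, glued_set Lm c /\ ltL u c /\ ltL c a)) ->
  is_sup (glued_set Lm) (glued_le le) A v ->
  exists x : S, (forall a, U a -> Lm x a) /\
    forall a b c, U a -> U b -> U c ->
      (is_lub (glued_set Lm) (glued_le le) a b c <-> is_lub (Lm x) (le x) a b c) /\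
      (is_glb (glued_set Lm) (glued_le le) a b c <-> is_glb (Lm x) (le x) a b c).
Proof.
  intros ltL A HA Hsup. subst ltL A.
  destruct Hsys as [Hfl [H1 [H2 [H3 H4]]]].
  assert (K : core Lm le).
  { constructor.
    - intros x a b H. exact (proj1 (Hfl x) a b H).
    - intros x a H. exact (proj1 (proj2 (Hfl x)) a H).
    - intros x a b c Hab Hbc.
      destruct (Hfl x) as [_ [_ [_ [Htr _]]]]. exact (Htr a b c Hab Hbc).
    - intros x a b Ha Hb.
      destruct (Hfl x) as [_ [_ [_ [_ [Hlub _]]]]]. exact (Hlub a b Ha Hb).
    - intros x. destruct (Hfl x) as [_ [_ [_ [_ [_ [_ [Hbot _]]]]]]]. exact Hbot.
    - intros x y a b Hxy Hxa Hya H.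
      destruct (H1 x y Hxy (ex_intro _ a (conj Hxa Hya))) as [[_ [_ [Hup _]]] _].
      destruct (proj1 (Hfl x) a b H) as [_ Hxb].
      exact (proj2 (Hup a b (conj Hxa Hya) Hxb H)).
    - intros x y a b Hxy Hxa Hya H.
      destruct (H1 x y Hxy (ex_intro _ a (conj Hxa Hya))) as [_ [_ [_ [Hdn _]]]].
      destruct (proj1 (Hfl y) b a H) as [Hyb _].
      exact (proj1 (Hdn a b (conj Hxa Hya) Hyb H)).
    - intros x y a b Hxy Hxa Hya Hxb Hyb.
      exact (H2 x y Hxy (ex_intro _ a (conj Hxa Hya)) a b Hxa Hya Hxb Hyb).
    - intros x y a Hx Hy. exact (H4 x y a Hx Hy).
    - intros x a b Ha Hb.
      destruct (Hfl x) as [_ [_ [_ [_ [_ [Hglb _]]]]]]. exact (Hglb a b Ha Hb).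
    - intros x. destruct (Hfl x) as [_ [_ [_ [_ [_ [_ [_ [Htop _]]]]]]]]. exact Htop. }
  destruct Hu as [HUu Hu]. destruct Hv as [HUv Hv].
  destruct (HUL u HUu) as [y0 Hy0].
  destruct (exists_maximal _ _ _ HS (fun a _ => le_refl a)
     (fun a b H1 H2 => le_anti (introT andP (conj H1 H2)))
     (fun a b c H1 H2 => le_trans H1 H2) (fun y => Lm y u) (fun _ _ => I) _ Hy0)
    as [x0 [Hx0u Hx0max]].
  assert (Hmax : forall y, Lm y u -> y <= x0).
  { intros y Hy. destruct (K10 K Hx0u Hy) as [_ Hj].
    assert (E := Hx0max _ Hj (leUl x0 y)). rewrite -E. exact (leUr y x0). }
  assert (HAx : forall a, (U a /\ a <> u /\ ~ (exists b, U b /\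
      (glued_le le u b /\ u <> b) /\ (glued_le le b a /\ b <> a))) -> Lm x0 a).
  { intros a Ha. destruct (HA a Ha) as [[Hua Hne] Hnc].
    destruct (cover_step le u a Hua) as [y Hy].
    { intros t Hut Hta. destruct (classic (t = u)) as [E|E]; auto.
      destruct (classic (t = a)) as [E'|E']; auto. exfalso. apply Hnc.
      exists t. split; [exact (proj2 (ct_gs K Hut))|].
      split; split; auto. }
    destruct (K1 K Hy) as [Hyu _].
    exact (K7 K (Hmax y Hyu) Hyu Hx0u Hy). }
  destruct (Hfl x0) as [_ [Hrefl [Hanti [Htr [_ [_ [_ [_ Hfin]]]]]]]].
  destruct (exists_maximal _ _ _ Hfin Hrefl Hanti Htr
     (fun e => Lm x0 e /\ glued_le le e v) (fun a H => proj1 H)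
     _ (conj Hx0u (Hu v HUv))) as [s [[Hx0s Hsv] Hsmax]].
  assert (Hall : forall e, Lm x0 e -> glued_le le e v -> le x0 e s).
  { intros e He Hev. destruct (K5 K He Hx0s) as [c Hc].
    assert (Hcv : glued_le le c v) by exact (JA K He Hx0s Hc Hev Hsv).
    destruct Hc as [Hx0c [Hec [Hsc _]]].
    assert (E := Hsmax c (conj Hx0c Hcv) Hsc). rewrite E in Hec. exact Hec. }
  destruct Hsup as [_ [_ Hleast]].
  assert (Hvs : glued_le le v s).
  { apply Hleast. exists x0; exact Hx0s.
    intros a Ha. apply t_step. exists x0. apply Hall. exact (HAx a Ha).
    apply Hv. exact (proj1 Ha). }
  assert (Hx0v : Lm x0 v) by exact (G2 K Hx0s Hx0s Hsv Hvs).
  assert (HUx : forall a, U a -> Lm x0 a).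
  { intros a Ha. exact (G2 K Hx0u Hx0v (Hu a Ha) (Hv a Ha)). }
  exists x0. split; auto.
  intros a b c Ha Hb Hc.
  assert (Hxa := HUx a Ha). assert (Hxb := HUx b Hb). assert (Hxc := HUx c Hc).
  split; split.
  - intros [_ [Hac [Hbc Hl]]]. split; auto.
    split; [exact (G1 K Hxa Hxc Hac)|]. split; [exact (G1 K Hxb Hxc Hbc)|].
    intros e He Hae Hbe. apply (G1 K Hxc He). apply Hl.
    exists x0; auto. apply t_step; exists x0; auto. apply t_step; exists x0; auto.
  - intros Hl'. assert (Hl2 := Hl'). destruct Hl2 as [_ [Hac [Hbc _]]].
    split; [exists x0; auto|].
    split; [apply t_step; exists x0; auto|]. split; [apply t_step; exists x0; auto|].
    intros e _ Hae Hbe. exact (JA K Hxa Hxb Hl' Hae Hbe).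
  - intros [_ [Hca [Hcb Hl]]]. split; auto.
    split; [exact (G1 K Hxc Hxa Hca)|]. split; [exact (G1 K Hxc Hxb Hcb)|].
    intros e He Hea Heb. apply (G1 K He Hxc). apply Hl.
    exists x0; auto. apply t_step; exists x0; auto. apply t_step; exists x0; auto.
  - intros Hg'. assert (Hg2 := Hg'). destruct Hg2 as [_ [Hca [Hcb _]]].
    split; [exists x0; auto|].
    split; [apply t_step; exists x0; auto|]. split; [apply t_step; exists x0; auto|].
    intros e _ Hea Heb. exact (MA K Hxa Hxb Hg' Hea Heb).
Qed.
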